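(* Let $n\ge3$ and let $P$ be the $n\times n$ matrix whose first row has all entries equal to $1/n$ and whose row $i$, for $2\le i\le n$, has entry $1$ in column $i-1$ and zeros elsewhere. Then $P$ is SIA and its SIA index equals $n-1$; in particular the set $\mathcal V_{n-1}$ is nonempty.
   Context: Let $\mathcal N=\{1,\ldots,n\}$. A matrix is stochastic if it is entrywise nonnegative with row sums $1$. For stochastic $P$ and $\mathcal A\subseteq\mathcal N$, $F_P(\mathcal A)=\{j:\ p_{ij}>0\text{ for some } i\in\mathcal A\}$, $F_P^1=F_P$, $F_P^k(\mathcal A)=F_P(F_P^{k-1}(\mathcal A))$. $P$ is SIA if $\lim_{m\to\infty}P^m=\mathbf 1c^T$ for some nonnegative $c$ with entries summing to $1$. For an SIA matrix $P$ and each unordered pair of disjoint nonempty sets $\mathcal A,\tilde{\mathcal A}\subseteq\mathcal N$, let $s(\mathcal A,\tilde{\mathcal A})$ be the smallest integer $k\ge1$ such that either (i) $F_P^k(\mathcal A)\cap F_P^k(\tilde{\mathcal A})\ne\emptyset$, or (ii) $F_P^k(\mathcal A)\cap F_P^k(\tilde{\mathcal A})=\emptyset$ and $|F_P^k(\mathcal A)\cup F_P^k(\tilde{\mathcal A})|>|\mathcal A\cup\tilde{\mathcal A}|$. The SIA index of $P$ is the maximum of $s(\mathcal A,\tilde{\mathcal A})$ over all such pairs. $\mathcal V_k$ denotes the set of $n\times n$ SIA matrices with SIA index exactly $k$. *)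

(* Defs.v *)
From HB Require Import structures.
From mathcomp Require Import all_boot all_order all_algebra.
Set Implicit Arguments. Unset Strict Implicit. Unset Printing Implicit Defensive.
Import Order.TTheory GRing.Theory Num.Theory.
Local Open Scope ring_scope.

Section SIA.
Variables (R : archiRealFieldType) (n : nat).
Implicit Types (P : 'M[R]_n) (A B : {set 'I_n}).

(* P^m, defined for every n (the square-matrix ring needs n = n'.+1). *)
Definition mxpow P (m : nat) : 'M[R]_n := iter m (mulmx P) 1%:M.

Definition stochastic P : Prop :=
  (forall i j, 0 <= P i j) /\ (forall i, \sum_j P i j = 1).

Definition SIA P : Prop :=
  stochastic P /\
  exists c : 'I_n -> R,
    (forall j, 0 <= c j) /\ \sum_j c j = 1 /\
    forall eps : R, 0 < eps -> exists N : nat, forall m : nat, (N <= m)%N ->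
      forall i j, `|mxpow P m i j - c j| < eps.

Definition FP P A : {set 'I_n} := [set j | [exists i in A, 0 < P i j]].
Definition FPk P (k : nat) A : {set 'I_n} := iter k (FP P) A.

Definition sia_cond P A B (k : nat) : bool :=
  (FPk P k A :&: FPk P k B != set0) ||
  ((FPk P k A :&: FPk P k B == set0) &&
   (#|A :|: B| < #|FPk P k A :|: FPk P k B|)%N).

Definition s_is P A B (k : nat) : bool :=
  [&& (0 < k)%N, sia_cond P A B k &
      [forall k' : 'I_k, (0 < k')%N ==> ~~ sia_cond P A B k']].

Definition admissible_pair A B : bool :=
  [&& A != set0, B != set0 & [disjoint A & B]].

Definition sia_index_is P (k : nat) : Prop :=
  (forall A B, admissible_pair A B ->
     exists2 k', s_is P A B k' & (k' <= k)%N) /\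
  (exists A B, admissible_pair A B /\ s_is P A B k).

Definition V_set (k : nat) : 'M[R]_n -> Prop :=
  fun P => SIA P /\ sia_index_is P k.

End SIA.

(* The matrix of the theorem (0-based indices): row 0 is constantly 1/n,
   row i >= 1 has a 1 in column i-1 and zeros elsewhere. *)
Definition Pex (R : archiRealFieldType) (n : nat) : 'M[R]_n :=
  \matrix_(i, j) if val i == 0%N then (n%:R)^-1
                 else if val j == (val i).-1 then 1 else 0.

(* Main.v *)
Require Import Defs.
From HB Require Import structures.
From mathcomp Require Import all_boot all_order all_algebra.
From mathcomp Require Import zify ring lra.
Set Implicit Arguments. Unset Strict Implicit. Unset Printing Implicit Defensive.
Import Order.TTheory GRing.Theory Num.Theory.
Local Open Scope ring_scope.


Section Comb.
Variables (R : archiRealFieldType) (n : nat).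
Hypothesis n0 : (0 < n)%N.
Local Notation P := (Pex R n).

Lemma Pex_gt0 (i j : 'I_n) : (0 < P i j) = ((val i == 0%N) || (val i == (val j).+1)).
Proof.
rewrite mxE; case: eqP => [_|/eqP i0] /=.
  by rewrite invr_gt0 ltr0n.
have -> : (val i == (val j).+1) = (val j == (val i).-1).
  by rewrite -{1}(prednK (_ : 0 < val i)%N) ?lt0n // eqSS eq_sym.
by case: ifP; rewrite ?ltr01 ?ltxx.
Qed.

Lemma FP_setT (X : {set 'I_n}) x : x \in X -> val x = 0%N -> FP P X = setT.
Proof.
move=> xX x0; apply/setP => j; rewrite !inE; apply/existsP; exists x.
by rewrite xX Pex_gt0 x0.
Qed.

Lemma FP_mem (X : {set 'I_n}) j :
  (j \in FP P X) = [exists i in X, (val i == 0%N) || (val i == (val j).+1)].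
Proof.
rewrite inE; apply/existsP/existsP => -[i /andP[iX h]]; exists i; by rewrite iX ?Pex_gt0 in h *.
Qed.

Definition inS k (A : {set 'I_n}) (j : 'I_n) := [exists i in A, val i == (val j + k)%N].

Lemma FPk_shift k (A : {set 'I_n}) : (forall i, i \in A -> (k <= val i)%N) ->
  forall j, (j \in FPk P k A) = inS k A j.
Proof.
elim: k => [|k IH] hA j.
  rewrite /FPk /= /inS; apply/idP/existsP => [jA|[i /andP[iA /eqP h]]].
    by exists j; rewrite jA addn0 eqxx.
  by rewrite (_ : j = i) //; apply: val_inj; rewrite h addn0.
have hA' : forall i, i \in A -> (k <= val i)%N by move=> i /hA; apply: ltnW.
rewrite /FPk iterS -/(FPk P k A) FP_mem.
apply/existsP/existsP => [[i /andP[iX /orP[/eqP i0|/eqP ij]]]|[i /andP[iA /eqP h]]].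
- move: iX; rewrite IH // => /existsP[i' /andP[i'A /eqP h]].
  by move: (hA _ i'A); rewrite h i0 add0n ltnn.
- move: iX; rewrite IH // => /existsP[i' /andP[i'A /eqP h]].
  by exists i'; rewrite i'A h ij addSnnS eqxx.
- have lt : ((val j).+1 < n)%N.
    by apply: leq_ltn_trans (ltn_ord i); rewrite h addnS ltnS leq_addr.
  exists (Ordinal lt); rewrite IH //= /inS; apply/andP; split; last by [].
  apply/existsP; exists i; by rewrite iA h /= addnS addSn eqxx.
Qed.

Lemma FPk_full k (A : {set 'I_n}) i : i \in A -> (val i < k)%N -> FPk P k A = setT.
Proof.
elim: k i => [//|k IH] i iA lt.
rewrite /FPk iterS -/(FPk P k A).
have z : (0 < n)%N by [].
case: (boolP [exists x in A, val x < k]%N) => [/existsP[x /andP[xA xk]]|].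
  rewrite (IH _ xA xk); apply: (@FP_setT _ (Ordinal z)) => //; by rewrite inE.
move/existsPn => hn.
have hA : forall x, x \in A -> (k <= val x)%N.
  by move=> x xA; move: (hn x); rewrite xA /= -leqNgt.
apply: (@FP_setT _ (Ordinal z)) => //.
rewrite FPk_shift //; apply/existsP; exists i; rewrite iA /= add0n eqn_leq hA //.
by rewrite -ltnS lt.
Qed.

Lemma FP_nonempty (X : {set 'I_n}) : X != set0 -> FP P X != set0.
Proof.
case/set0Pn => x xX; apply/set0Pn.
case: (boolP (val x == 0%N)) => [/eqP x0|xn0].
  by exists x; rewrite (FP_setT xX x0) inE.
have lt : ((val x).-1 < n)%N by apply: leq_ltn_trans (ltn_ord x); apply: leq_pred.
exists (Ordinal lt); rewrite FP_mem; apply/existsP; exists x.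
by rewrite xX /= prednK ?eqxx ?orbT // lt0n.
Qed.

Lemma FPk_nonempty k (X : {set 'I_n}) : X != set0 -> FPk P k X != set0.
Proof.
elim: k => [//|k IH] h; rewrite /FPk iterS; exact: FP_nonempty (IH h).
Qed.

Lemma card_shift k (X : {set 'I_n}) :
  (#|[set j | inS k X j]| <= #|X|)%N.
Proof.
apply: leq_trans (leq_imset_card (fun i : 'I_n => insubd i (val i - k)%N) X).
apply: subset_leq_card; apply/subsetP => j; rewrite inE => /existsP[i /andP[iA /eqP h]].
apply/imsetP; exists i => //; apply: val_inj => /=.
by rewrite h addnK insubdK //; apply: ltn_ord.
Qed.

Lemma s_min (A B : {set 'I_n}) m : admissible_pair A B ->
  (exists2 x, x \in A :|: B & val x = m) ->
  (forall x, x \in A :|: B -> (m <= val x)%N) -> s_is P A B m.+1.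
Proof.
case/and3P => nA nB dAB [x xAB xm] hm.
apply/and3P; split => //.
  apply/orP; left; move: xAB; rewrite inE => /orP[xA|xB].
    by rewrite (FPk_full xA) ?xm // setTI FPk_nonempty.
  by rewrite (FPk_full xB) ?xm // setIT FPk_nonempty.
apply/forallP => k'; apply/implyP => k'0.
have kA : forall i, i \in A -> (k' <= val i)%N.
  move=> i iA; apply: leq_trans (hm i _); last by rewrite inE iA.
  by rewrite -ltnS ltn_ord.
have kB : forall i, i \in B -> (k' <= val i)%N.
  move=> i iB; apply: leq_trans (hm i _); last by rewrite inE iB orbT.
  by rewrite -ltnS ltn_ord.
have HI : (FPk P k' A :&: FPk P k' B == set0).
  apply/eqP/setP => j; rewrite !inE !FPk_shift //; apply/negbTE/negP.
  case/andP => /existsP[i /andP[iA /eqP hi]] /existsP[i' /andP[i'B /eqP hi']].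
  have ii : i = i' by apply: val_inj; rewrite hi hi'.
  move: dAB; rewrite -setI_eq0 => /eqP/setP/(_ i); rewrite !inE iA ii i'B.
  by [].
rewrite /sia_cond HI /= -leqNgt.
apply: leq_trans (card_shift k' (A :|: B)).
apply: subset_leq_card; apply/subsetP => j.
rewrite !inE !FPk_shift // => /orP[]/existsP[i /andP[iX hi]]; apply/existsP; exists i;
  by rewrite inE iX ?orbT.
Qed.

Lemma index_part : (2 <= n)%N -> sia_index_is P n.-1.
Proof.
move=> n2; split.
  move=> A B adm; have adm' := adm; case/and3P: adm' => nA nB dAB.
  case/set0Pn: nA => a aA.
  have i0 : a \in A :|: B by rewrite inE aA.
  case: (@arg_minnP _ a [pred y | y \in A :|: B] (fun x : 'I_n => val x) i0) => x xAB hx.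
  exists (val x).+1; first by apply: s_min => //; exists x.
  case/set0Pn: nB => b bB.
  have ab : a != b.
    apply/eqP => eab; move: dAB; rewrite -setI_eq0 => /eqP/setP/(_ a).
    by rewrite !inE aA eab bB.
  have ha : (val x <= val a)%N by apply: hx; rewrite /= inE aA.
  have hb : (val x <= val b)%N by apply: hx; rewrite /= inE bB orbT.
  have nab : val a <> val b by move/val_inj; apply/eqP.
  have la : (val a < n)%N := ltn_ord a.
  have lb : (val b < n)%N := ltn_ord b.
  lia.
have l1 : (n - 2 < n)%N by lia.
have l2 : (n - 1 < n)%N by lia.
exists [set Ordinal l1], [set Ordinal l2]; split.
  rewrite /admissible_pair -!card_gt0 !cards1 /= disjoint_sym disjoints1 inE.
  by apply/eqP => /(congr1 val) /=; lia.
rewrite (_ : n.-1 = (n - 2).+1); last by lia.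
apply: s_min.
  by rewrite /admissible_pair -!card_gt0 !cards1 /= disjoint_sym disjoints1 inE;
     apply/eqP => /(congr1 val) /=; lia.
  by exists (Ordinal l1); rewrite // !inE eqxx.
by move=> x; rewrite !inE => /orP[]/eqP -> /=; lia.
Qed.
End Comb.


Section Gen.
Variable (R : archiRealFieldType).

Lemma single_le (T : finType) (F : T -> R) c : (forall k, 0 <= F k) -> F c <= \sum_k F k.
Proof. by move=> h; rewrite (bigD1 c) //= lerDl sumr_ge0. Qed.

Lemma ex_max (T : finType) (f : T -> R) (i0 : T) : exists a, forall k, f k <= f a.
Proof.
have: forall s : seq T, exists a, forall k, k \in s -> f k <= f a.
  elim => [|x s [a ha]]; first by exists i0.
  case: (lerP (f x) (f a)) => h.
    by exists a => k; rewrite inE => /orP[/eqP->|/ha].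
  exists x => k; rewrite inE => /orP[/eqP->//|/ha hk].
  exact: le_trans hk (ltW h).
case/(_ (enum T)) => a ha; exists a => k; apply: ha; by rewrite mem_enum.
Qed.

Lemma geo_small (d : R) : 0 < d -> d <= 1 -> forall eps, 0 < eps ->
  exists k : nat, (1 - d) ^+ k < eps.
Proof.
move=> d0 d1 eps e0.
have bern : forall k : nat, 1 + k%:R * d <= (1 + d) ^+ k.
  elim => [|k IH]; first by rewrite mul0r addr0 expr0.
  rewrite exprS -natr1 mulrDl mul1r.
  apply: le_trans (_ : (1 + d) * (1 + k%:R * d) <= _); last first.
    by apply: ler_wpM2l => //; lra.
  have : 0 <= k%:R * d * d by rewrite !mulr_ge0 // ltW.
  lra.
have prod : forall k : nat, (1 - d) ^+ k * (1 + d) ^+ k <= 1.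
  move=> k; rewrite -exprMn; apply: exprn_ile1.
    by apply: mulr_ge0; lra.
  have : 0 <= d * d by apply: mulr_ge0; lra.
  move=> h; have -> : (1 - d) * (1 + d) = 1 - d * d by ring.
  lra.
set x := (eps * d)^-1.
have x0 : 0 <= x by rewrite invr_ge0; apply: mulr_ge0; lra.
have hb := archi_boundP x0.
set k := Num.Def.archi_bound x in hb.
exists k.
have pk := prod k; have bk := bern k.
have q0 : 0 <= (1 - d) ^+ k by apply: exprn_ge0; lra.
have kd : eps^-1 < k%:R * d.
  have -> : eps^-1 = x * d by rewrite /x invfM mulfVK // gt_eqF.
  by rewrite ltr_pM2r.
rewrite ltNge; apply/negP => he.
have e1 : 1 < eps * (1 + k%:R * d).
  have : eps * eps^-1 = 1 by rewrite divff // gt_eqF.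
  have : eps * eps^-1 < eps * (k%:R * d) by rewrite ltr_pM2l.
  nra.
have : eps * (1 + k%:R * d) <= (1 - d) ^+ k * (1 + d) ^+ k.
  apply: ler_pM => //; [lra | nra].
lra.
Qed.
End Gen.

Section Mat.
Variables (R : archiRealFieldType) (n : nat).
Hypothesis n0 : (0 < n)%N.
Local Notation P := (Pex R n).
Local Notation M := (mxpow P).
Let z : 'I_n := Ordinal n0.

Lemma mxpowS m : M m.+1 = P *m M m. Proof. by []. Qed.

Lemma mxpowD a b : M (a + b) = M a *m M b.
Proof.
elim: a => [|a IH]; first by rewrite /mxpow /= mul1mx.
by rewrite addSn !mxpowS IH mulmxA.
Qed.

Lemma stoch_mul (S T : 'M[R]_n) : stochastic S -> stochastic T -> stochastic (S *m T).
Proof.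
case=> S0 S1 [T0 T1]; split.
  by move=> i j; rewrite mxE sumr_ge0 // => k _; rewrite mulr_ge0.
move=> i; rewrite (eq_bigr (fun j => \sum_k S i k * T k j)); last by move=> j _; rewrite mxE.
rewrite exchange_big /= -(S1 i); apply: eq_bigr => k _.
by rewrite -mulr_sumr T1 mulr1.
Qed.

Lemma stoch1 : stochastic (1%:M : 'M[R]_n).
Proof.
split; first by move=> i j; rewrite mxE ler0n.
move=> i; rewrite (bigD1 i) //= mxE eqxx big1 ?addr0 // => j ji.
by rewrite mxE eq_sym (negbTE ji).
Qed.

Lemma stochP : stochastic P.
Proof.
split.
  move=> i j; rewrite mxE; case: ifP => _; first by rewrite invr_ge0 ler0n.
  by case: ifP => _; rewrite ?ler01 ?lexx.
move=> i; case: (boolP (val i == 0%N)) => [i0|i0].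
  under eq_bigr do rewrite mxE i0.
  rewrite sumr_const card_ord.
  have -> : (n%:R^-1 : R) *+ n = n%:R^-1 * n%:R by rewrite mulr_natr.
  by rewrite mulVf // pnatr_eq0 -lt0n.
have lt : ((val i).-1 < n)%N by apply: leq_ltn_trans (ltn_ord i); apply: leq_pred.
rewrite (bigD1 (Ordinal lt)) //= mxE (negbTE i0) eqxx big1 ?addr0 // => j jx.
rewrite mxE (negbTE i0); case: eqP => // e; case/eqP: jx; exact: val_inj.
Qed.

Lemma stochM m : stochastic (M m).
Proof. elim: m => [|m IH]; [exact: stoch1 | exact: stoch_mul stochP IH]. Qed.

Lemma M01 m i j : 0 <= M m i j <= 1.
Proof.
case: (stochM m) => h0 h1; rewrite h0 /= -(h1 i); exact: single_le.
Qed.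

Lemma col0 m i : (val i <= m)%N -> (n%:R^-1) ^+ m.+1 <= M m.+1 i z.
Proof.
have ni : 0 <= (n%:R : R)^-1 <= 1.
  by rewrite invr_ge0 ler0n /= invf_le1 ?ler1n ?ltr0n.
case/andP: ni => ni0 ni1.
elim: m i => [|m IH] i hi.
  rewrite /mxpow /= mulmx1 mxE expr1; move: hi; rewrite leqn0 => ->; by [].
rewrite mxpowS mxE.
have t0 : forall k, 0 <= P i k * M m.+1 k z.
  by move=> k; case: stochP => h _; rewrite mulr_ge0 // ; case/andP: (M01 m.+1 k z).
case: (boolP (val i == 0%N)) => [i0|i0].
  apply: le_trans (@single_le _ _ _ z t0).
  rewrite mxE i0 exprS ler_wpM2l //; apply: IH; by [].
have lt : ((val i).-1 < n)%N by apply: leq_ltn_trans (ltn_ord i); apply: leq_pred.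
apply: le_trans (@single_le _ _ _ (Ordinal lt) t0).
rewrite mxE (negbTE i0) eqxx mul1r.
apply: le_trans (IH _ _); first by rewrite exprS ler_piMl // exprn_ge0.
by rewrite /= -ltnS prednK // lt0n.
Qed.

Definition dl : R := (n%:R^-1) ^+ n.

Lemma dl_pos : 0 < dl /\ dl <= 1.
Proof.
split; first by rewrite exprn_gt0 // invr_gt0 ltr0n.
by apply: exprn_ile1; rewrite ?invr_ge0 ?ler0n // invf_le1 ?ler1n ?ltr0n.
Qed.

Lemma colQ i : dl <= M n i z.
Proof.
have := @col0 n.-1 i; rewrite prednK //; apply.
by rewrite -ltnS prednK //; exact: ltn_ord.
Qed.

Lemma contract (S : 'M[R]_n) (v : 'I_n -> R) d : stochastic S ->
  (forall i, dl <= S i z) -> (forall k k', v k - v k' <= d) ->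
  forall i i', \sum_k S i k * v k - \sum_k S i' k * v k <= (1 - dl) * d.
Proof.
case=> S0 S1 hz hv i i'.
have [b hb] := ex_max v z.
have [a ha] := ex_max (fun k => - v k) z.
have ha' : forall k, v a <= v k by move=> k; rewrite -lerN2 ha.
have up : \sum_k S i k * v k <= v b - dl * (v b - v z).
  have e : \sum_k S i k * v k = v b - \sum_k S i k * (v b - v k).
    under [X in _ = _ - X]eq_bigr do rewrite mulrBr.
    by rewrite sumrB -mulr_suml S1 mul1r opprB addrC subrK.
  rewrite e lerD2l lerN2.
  apply: le_trans (@single_le _ _ _ z _); last by move=> k; rewrite mulr_ge0 // subr_ge0.
  by rewrite ler_wpM2r // subr_ge0.
have lo : v a + dl * (v z - v a) <= \sum_k S i' k * v k.
  have e : \sum_k S i' k * v k = v a + \sum_k S i' k * (v k - v a).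
    under [X in _ = _ + X]eq_bigr do rewrite mulrBr.
    by rewrite sumrB -mulr_suml S1 mul1r addrC subrK.
  rewrite e lerD2l.
  apply: le_trans (@single_le _ _ _ z _); last by move=> k; rewrite mulr_ge0 // subr_ge0.
  by rewrite ler_wpM2r // subr_ge0.
have hd : v b - v a <= d := hv b a.
have [dp d1] := dl_pos.
have : (1 - dl) * (v b - v a) <= (1 - dl) * d by rewrite ler_wpM2l // subr_ge0.
lra.
Qed.

Lemma spread j k : forall m, (k * n <= m)%N -> forall i i', M m i j - M m i' j <= (1 - dl) ^+ k.
Proof.
elim: k => [|k IH] m hm i i'.
  rewrite expr0; case/andP: (M01 m i j) => _ h1; case/andP: (M01 m i' j) => h0 _; lra.
have e : m = (n + (m - n))%N by move: hm; rewrite mulSn; lia.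
rewrite e mxpowD !mxE exprS.
apply: contract; [exact: stochM | exact: colQ | ].
move=> a b; apply: IH; move: hm; rewrite mulSn; lia.
Qed.

Definition Ssum : R := \sum_(k < n) (n - k)%:R.
Definition cst (j : 'I_n) : R := (n - j)%:R / Ssum.

Lemma Ssum_gt0 : 0 < Ssum.
Proof.
apply: lt_le_trans (@single_le _ _ _ z _); last by move=> k; rewrite ler0n.
by rewrite /= subn0 ltr0n.
Qed.

Lemma Pex_split k j : P k j =
  (if val k == 0%N then n%:R^-1 else 0) + (if val k == (val j).+1 then 1 else 0).
Proof.
rewrite mxE; case: eqP => [k0|/eqP k0]; first by rewrite k0 /= addr0.
rewrite add0r.
have -> : (val k == (val j).+1) = (val j == (val k).-1).
  by rewrite -{1}(prednK (_ : 0 < val k)%N) ?lt0n // eqSS eq_sym.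
by [].
Qed.

Lemma sum_val_in m (hm : (m < n)%N) (G : 'I_n -> R) a :
  \sum_k G k * (if val k == m then a else 0) = G (Ordinal hm) * a.
Proof.
rewrite (bigD1 (Ordinal hm)) //= eqxx big1 ?addr0 // => k kx.
case: eqP => [e|_]; last exact: mulr0.
case/eqP: kx; exact: val_inj.
Qed.

Lemma sum_val_out m (hm : (n <= m)%N) (G : 'I_n -> R) a :
  \sum_k G k * (if val k == m then a else 0) = 0.
Proof.
apply: big1 => k _; case: eqP => [e|_]; last exact: mulr0.
by have := ltn_ord k; rewrite e ltnNge hm.
Qed.

Definition crow : 'rV[R]_n := \row_j cst j.

Lemma crowP : crow *m P = crow.
Proof.
apply/rowP => j; rewrite !mxE.
under eq_bigr do rewrite mxE Pex_split mulrDr.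
rewrite big_split /= (sum_val_in n0) /=.
have Sn : Ssum != 0 by rewrite gt_eqF // Ssum_gt0.
have h0 : cst z * n%:R^-1 = Ssum^-1.
  by rewrite /cst /= subn0 mulrAC divff ?mul1r // pnatr_eq0 -lt0n.
rewrite h0.
case: (ltnP (val j).+1 n) => hj.
  rewrite (sum_val_in hj) mulr1 /cst /=.
  have -> : (n - val j = (n - (val j).+1).+1)%N by lia.
  by rewrite -natr1 mulrDl mul1r addrC.
rewrite (sum_val_out hj) addr0 /cst.
have -> : (n - val j = 1)%N by have lj : (val j < n)%N := ltn_ord j; lia.
by rewrite mul1r.
Qed.

Lemma crow_pow m : crow *m M m = crow.
Proof.
elim: m => [|m IH]; first by rewrite /mxpow /= mulmx1.
by rewrite mxpowS mulmxA crowP IH.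
Qed.

Lemma cst_sum : \sum_j cst j = 1.
Proof. by rewrite -mulr_suml divff // gt_eqF // Ssum_gt0. Qed.

Lemma cst_ge0 j : 0 <= cst j.
Proof. by rewrite divr_ge0 ?ler0n // ltW // Ssum_gt0. Qed.

Lemma SIA_P : SIA P.
Proof.
split; first exact: stochP.
exists cst; split; first exact: cst_ge0.
split; first exact: cst_sum.
move=> eps e0.
have [dp d1] := dl_pos.
have [k hk] := geo_small dp d1 e0.
exists (k * n)%N => m hm i j.
have ec : cst j = \sum_l cst l * M m l j.
  have := congr1 (fun A : 'rV_n => A 0 j) (crow_pow m) => /=.
  rewrite mxE [in RHS]mxE => <-; apply: eq_bigr => l _; by rewrite mxE.
have ei : M m i j = \sum_l cst l * M m i j by rewrite -mulr_suml cst_sum mul1r.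
rewrite ec {1}ei -sumrB.
apply: le_lt_trans (ler_norm_sum _ _ _) _.
apply: le_lt_trans hk.
apply: le_trans (_ : \sum_l cst l * (1 - dl) ^+ k <= _); last first.
  by rewrite -mulr_suml cst_sum mul1r.
apply: ler_sum => l _; rewrite -mulrBr normrM ger0_norm ?cst_ge0 //.
apply: ler_wpM2l; first exact: cst_ge0.
rewrite ler_norml (spread _ hm) andbT lerNl opprB; exact: spread.
Qed.
End Mat.

Theorem mainTheorem2 (R : archiRealFieldType) (n : nat) :
  (3 <= n)%N ->
  SIA (Pex R n) /\ sia_index_is (Pex R n) n.-1 /\
  (exists Q : 'M[R]_n, V_set n.-1 Q).
Proof.
move=> n3.
have n0 : (0 < n)%N by lia.
have n2 : (2 <= n)%N by lia.
have hS := SIA_P R n0.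
have hI := index_part R n0 n2.
split; first exact: hS.
split; first exact: hI.
by exists (Pex R n); split.
Qed.
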